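(* Let $\mathcal{D}\subset\mathbb{R}^n$ be a parameter set, let $X$ and $Y$ be finite-dimensional real Hilbert spaces with norms $\|\cdot\|_X$, $\|\cdot\|_Y$, and for each $\mu\in\mathcal{D}$ let $m(\cdot,\cdot;\mu):X\times X\to\mathbb{R}$, $a(\cdot,\cdot;\mu):X\times X\to\mathbb{R}$, $b(\cdot,\cdot;\mu):X\times Y\to\mathbb{R}$ be bilinear forms such that $m(\cdot,\cdot;\mu)$ is symmetric with $m(v,v;\mu)>0$ for all $0\neq v\in X$, and \[ \gamma_m(\mu)=\sup_{u\in X}\sup_{v\in X}\frac{m(u,v;\mu)}{\|u\|_X\|v\|_X}<\infty,\quad \gamma_a(\mu)=\sup_{u\in X}\sup_{v\in X}\frac{a(u,v;\mu)}{\|u\|_X\|v\|_X}<\infty, \] \[ \alpha_a(\mu)=\inf_{v\in X}\frac{a(v,v;\mu)}{\|v\|_X^2}>0,\qquad \beta(\mu)=\inf_{q\in Y}\sup_{v\in X}\frac{b(v,q;\mu)}{\|q\|_Y\|v\|_X}>0 . \] Let $K\in\mathbb{N}$, $\Delta t>0$, $\mathbb{K}=\{1,\dots,K\}$, and for each $k\in\mathbb{K}$ and $\mu\in\mathcal{D}$ let $f^k(\cdot;\mu)\in X'$, $g^k(\cdot;\mu)\in Y'$. Let the truth solution $u^k(\mu)\in X$, $p^k(\mu)\in Y$, $k\in\mathbb{K}$, be defined by $u^0(\mu)=0$ and, for $k\in\mathbb{K}$, \[ \tfrac{1}{\Delta t}m(u^k(\mu)-u^{k-1}(\mu),v;\mu)+a(u^k(\mu),v;\mu)+b(v,p^k(\mu);\mu)=f^k(v;\mu)\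 \ \forall v\in X,\qquad b(u^k(\mu),q;\mu)=g^k(q;\mu)\ \ \forall q\in Y. \] Let $X_N\subset X$, $Y_N\subset Y$, $N\in\{1,\dots,N_{\max}\}$, be subspaces such that for every $\mu\in\mathcal{D}$ there exist $u^k_N(\mu)\in X_N$, $p^k_N(\mu)\in Y_N$, $k\in\mathbb{K}$, with $u^0_N(\mu)=0$ and, for $k\in\mathbb{K}$, \[ \tfrac{1}{\Delta t}m(u^k_N(\mu)-u^{k-1}_N(\mu),v_N;\mu)+a(u^k_N(\mu),v_N;\mu)+b(v_N,p^k_N(\mu);\mu)=f^k(v_N;\mu)\ \ \forall v_N\in X_N, \] \[ b(u^k_N(\mu),q_N;\mu)=g^k(q_N;\mu)\ \ \forall q_N\in Y_N. \] Define the residuals $r^{1,k}_N(v;\mu)=f^k(v;\mu)-\tfrac{1}{\Delta t}m(u^k_N(\mu)-u^{k-1}_N(\mu),v;\mu)-a(u^k_N(\mu),v;\mu)-b(v,p^k_N(\mu);\mu)$ for $v\in X$ and $r^{2,k}_N(q;\mu)=g^k(q;\mu)-b(u^k_N(\mu),q;\mu)$ for $q\in Y$, and the errors $e^{u,k}_N(\mu)=u^k(\mu)-u^k_N(\mu)$. Let $\mu\in\mathcal{D}$, $N\in\{1,\dots,N_{\max}\}$, $k\in\mathbb{K}$, and let $\alpha_a^{\rm LB}(\mu),\gamma_a^{\rm UB}(\mu),\beta^{\rm LB}(\mu),\gamma_m^{\rm UB}(\mu)$ be positive numbers with $\alpha_a^{\rm LB}(\mu)\le\alpha_a(\mu)$,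 $\gamma_a(\mu)\le\gamma_a^{\rm UB}(\mu)$, $\beta^{\rm LB}(\mu)\le\beta(\mu)$, $\gamma_m(\mu)\le\gamma_m^{\rm UB}(\mu)$. Define \[ \Delta^k_N(\mu)=\Bigg[\Delta t\sum_{j=1}^k\frac{\|r^{1,j}_N(\cdot;\mu)\|^2_{X'}}{\alpha_a^{\rm LB}(\mu)}+\frac{2}{\beta^{\rm LB}(\mu)}\Big(1+\frac{\gamma_a^{\rm UB}(\mu)}{\alpha_a^{\rm LB}(\mu)}\Big)\|r^{1,j}_N(\cdot;\mu)\|_{X'}\|r^{2,j}_N(\cdot;\mu)\|_{Y'} \] \[ +\Big(\frac{\gamma_m^{\rm UB}(\mu)}{\Delta t}+\frac{(\gamma_a^{\rm UB}(\mu))^2}{\alpha_a^{\rm LB}(\mu)}\Big)\frac{\|r^{2,j}_N(\cdot;\mu)\|^2_{Y'}}{(\beta^{\rm LB}(\mu))^2}\Bigg]^{1/2}. \] Then \[ \Big(\|e^{u,k}_N(\mu)\|_\mu^2+\Delta t\sum_{j=1}^k\|e^{u,j}_N(\mu)\|^2_{X,\mu}\Big)^{1/2}\le\Delta^k_N(\mu). \]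
   Context: Here $\|v\|_\mu=\sqrt{m(v,v;\mu)}$ and $\|v\|_{X,\mu}=\sqrt{a(v,v;\mu)}$ for $v\in X$; $X'$, $Y'$ are the dual spaces with dual norms $\|r\|_{X'}=\sup_{0\ne v\in X}r(v)/\|v\|_X$ and $\|r\|_{Y'}=\sup_{0\ne q\in Y}r(q)/\|q\|_Y$. In the sum defining $\Delta^k_N(\mu)$, all three terms are inside the sum over $j$ and multiplied by $\Delta t$. The form $a(\cdot,\cdot;\mu)$ need not be symmetric. *)

(* Defs.v *)
From HB Require Import structures.
From mathcomp Require Import all_boot all_order all_algebra.
From mathcomp Require Import all_classical all_reals.
Set Implicit Arguments. Unset Strict Implicit. Unset Printing Implicit Defensive.
Import Order.TTheory GRing.Theory Num.Theory.
Local Open Scope ring_scope.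
Local Open Scope classical_set_scope.

(* A finite-dimensional real Hilbert space is modelled as 'rV[R]_n with the
   inner product <u,v>_G = u G v^T for a symmetric positive definite Gram matrix G. *)
Definition ip {R : realType} {n : nat} (G : 'M[R]_n) (u v : 'rV[R]_n) : R :=
  (u *m G *m v^T) 0 0.

Definition spd {R : realType} {n : nat} (G : 'M[R]_n) : Prop :=
  G^T = G /\ forall v : 'rV[R]_n, v != 0 -> 0 < ip G v v.

Definition hnorm {R : realType} {n : nat} (G : 'M[R]_n) (v : 'rV[R]_n) : R :=
  Num.sqrt (ip G v v).

Definition is_bilinear {R : realType} {n1 n2 : nat}
  (B : 'rV[R]_n1 -> 'rV[R]_n2 -> R) : Prop :=
  (forall (c : R) u1 u2 v, B (c *: u1 + u2) v = c * B u1 v + B u2 v) /\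
  (forall (c : R) u v1 v2, B u (c *: v1 + v2) = c * B u v1 + B u v2).

Definition is_linfun {R : realType} {n : nat} (f : 'rV[R]_n -> R) : Prop :=
  forall (c : R) u v, f (c *: u + v) = c * f u + f v.

Definition contset {R : realType} {n1 n2 : nat} (G1 : 'M[R]_n1) (G2 : 'M[R]_n2)
  (B : 'rV[R]_n1 -> 'rV[R]_n2 -> R) : set R :=
  [set r | exists u v, u != 0 /\ v != 0 /\ r = B u v / (hnorm G1 u * hnorm G2 v)].

Definition contconst {R : realType} {n1 n2 : nat} (G1 : 'M[R]_n1) (G2 : 'M[R]_n2)
  (B : 'rV[R]_n1 -> 'rV[R]_n2 -> R) : R := sup (contset G1 G2 B).

Definition coerconst {R : realType} {n : nat} (G : 'M[R]_n)
  (A : 'rV[R]_n -> 'rV[R]_n -> R) : R :=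
  inf [set r | exists v, v != 0 /\ r = A v v / (hnorm G v ^+ 2)].

Definition infsupconst {R : realType} {nx ny : nat} (GX : 'M[R]_nx) (GY : 'M[R]_ny)
  (b : 'rV[R]_nx -> 'rV[R]_ny -> R) : R :=
  inf [set r | exists q, q != 0 /\
       r = sup [set s | exists v, v != 0 /\ s = b v q / (hnorm GY q * hnorm GX v)]].

Definition dualnorm {R : realType} {n : nat} (G : 'M[R]_n) (r : 'rV[R]_n -> R) : R :=
  sup [set s | exists v, v != 0 /\ s = r v / hnorm G v].

(* Main.v *)
Require Import Defs.
From HB Require Import structures.
From mathcomp Require Import all_boot all_order all_algebra.
From mathcomp Require Import all_classical all_reals.
From mathcomp Require Import ring lra.
Import Order.TTheory GRing.Theory Num.Theory.
Local Open Scope ring_scope.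
Local Open Scope classical_set_scope.
Set Implicit Arguments. Unset Strict Implicit.

Section Bil.
Variables (R : realType) (n1 n2 : nat) (B : 'rV[R]_n1 -> 'rV[R]_n2 -> R).
Hypothesis hB : is_bilinear B.

Lemma BDl u1 u2 v : B (u1 + u2) v = B u1 v + B u2 v.
Proof. by have := hB.1 1 u1 u2 v; rewrite scale1r mul1r. Qed.
Lemma BDr u v1 v2 : B u (v1 + v2) = B u v1 + B u v2.
Proof. by have := hB.2 1 u v1 v2; rewrite scale1r mul1r. Qed.
Lemma B0l v : B 0 v = 0.
Proof. by have := BDl 0 0 v; rewrite addr0; lra. Qed.
Lemma B0r u : B u 0 = 0.
Proof. by have := BDr u 0 0; rewrite addr0; lra. Qed.
Lemma BZl c u v : B (c *: u) v = c * B u v.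
Proof. by have := hB.1 c u 0 v; rewrite addr0 B0l addr0. Qed.
Lemma BZr c u v : B u (c *: v) = c * B u v.
Proof. by have := hB.2 c u v 0; rewrite addr0 B0r addr0. Qed.
Lemma BNl u v : B (- u) v = - B u v.
Proof. by rewrite -scaleN1r BZl mulN1r. Qed.
Lemma BNr u v : B u (- v) = - B u v.
Proof. by rewrite -scaleN1r BZr mulN1r. Qed.
Lemma BBl u1 u2 v : B (u1 - u2) v = B u1 v - B u2 v.
Proof. by rewrite BDl BNl. Qed.
Lemma BBr u v1 v2 : B u (v1 - v2) = B u v1 - B u v2.
Proof. by rewrite BDr BNr. Qed.
End Bil.

Lemma subrACA' (V : zmodType) (a b c d : V) : (a - b) - (c - d) = (a - c) - (b - d).
Proof. by rewrite !opprD !opprK addrACA. Qed.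

Lemma ip_bil (R : realType) n (G : 'M[R]_n) : is_bilinear (ip G).
Proof.
split=> c u v w; rewrite /ip.
  by rewrite !mulmxDl -!scalemxAl !mxE.
by rewrite linearD linearZ /= mulmxDr -scalemxAr !mxE.
Qed.

Lemma ip_sym (R : realType) n (G : 'M[R]_n) : G^T = G -> forall u v, ip G u v = ip G v u.
Proof.
move=> hG u v; rewrite /ip.
transitivity (((u *m G *m v^T)^T) 0 0); first by rewrite [RHS]mxE.
by rewrite !trmx_mul trmxK hG mulmxA.
Qed.

Lemma CS_gen (R : realType) n (B : 'rV[R]_n -> 'rV[R]_n -> R) :
  is_bilinear B -> (forall u v, B u v = B v u) -> (forall v, v != 0 -> 0 < B v v) ->
  forall u v, B u v ^+ 2 <= B u u * B v v.
Proof.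
move=> hB hs hp u v.
have [->|nv] := eqVneq v 0; first by rewrite !B0r ?expr0n ?mulr0 //.
set x := B v v; set y := B u v.
have hx : 0 < x by apply: hp.
have h0 : 0 <= B (x *: u - y *: v) (x *: u - y *: v).
  have [->|nz] := eqVneq (x *: u - y *: v) 0; first by rewrite B0l.
  by apply/ltW/hp.
move: h0; rewrite !(BBl hB, BBr hB, BZl hB, BZr hB) (hs v u) -/x -/y => h0.
have : 0 <= x * (x * B u u - y ^+ 2) by lra.
by rewrite pmulr_rge0 // subr_ge0 mulrC.
Qed.

Section Norm.
Variables (R : realType) (n : nat) (G : 'M[R]_n).
Hypothesis hG : spd G.

Lemma ip_ge0 v : 0 <= ip G v v.
Proof.
have [->|nv] := eqVneq v 0; last by apply/ltW/hG.2.
by rewrite (B0l (ip_bil G)).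
Qed.
Lemma hnorm_ge0 v : 0 <= hnorm G v.
Proof. exact: sqrtr_ge0. Qed.
Lemma hnorm_sq v : hnorm G v ^+ 2 = ip G v v.
Proof. by rewrite /hnorm sqr_sqrtr // ip_ge0. Qed.
Lemma hnorm_gt0 v : v != 0 -> 0 < hnorm G v.
Proof. by move=> nv; rewrite /hnorm sqrtr_gt0; apply: hG.2. Qed.
Lemma hnorm0 : hnorm G 0 = 0.
Proof. by rewrite /hnorm (B0l (ip_bil G)) sqrtr0. Qed.
Lemma hnormN v : hnorm G (- v) = hnorm G v.
Proof. by rewrite /hnorm (BNl (ip_bil G)) (BNr (ip_bil G)) opprK. Qed.
Lemma CS u v : ip G u v <= hnorm G u * hnorm G v.
Proof.
have h := CS_gen (ip_bil G) (ip_sym hG.1) hG.2 u v.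
rewrite /hnorm -sqrtrM ?ip_ge0 //.
apply: le_trans (ler_norm _) _.
by rewrite -sqrtr_sqr; apply: ler_wsqrtr.
Qed.
Lemma spd_unit : G \in unitmx.
Proof.
rewrite -row_free_unit; apply: inj_row_free => v hv.
apply/eqP; apply/negPn/negP => nv.
have := hG.2 v nv; rewrite /ip hv mul0mx mxE ltxx //.
Qed.
End Norm.

Lemma linfun0 (R : realType) n (l : 'rV[R]_n -> R) : is_linfun l -> l 0 = 0.
Proof. by move=> hl; have := hl 1 0 0; rewrite scaler0 addr0 mul1r; lra. Qed.

Lemma linfun_mx (R : realType) n (l : 'rV[R]_n -> R) : is_linfun l ->
  forall v, l v = (v *m \col_i l 'e_i) 0 0.
Proof.
move=> hl v; rewrite mxE {1}(row_sum_delta v).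
elim/big_rec2: _ => [|i y1 y2 _ <-]; first by rewrite linfun0.
by rewrite hl mxE.
Qed.

Lemma bil_mx (R : realType) n1 n2 (B : 'rV[R]_n1 -> 'rV[R]_n2 -> R) : is_bilinear B ->
  forall u v, B u v = (u *m (\matrix_(i, j) B 'e_i 'e_j) *m v^T) 0 0.
Proof.
move=> hB u v.
have hl1 : is_linfun (B ^~ v) by move=> c x y; apply: hB.1.
rewrite (linfun_mx hl1) -mulmxA.
congr ((u *m _) 0 0); apply/matrixP => i j; rewrite !mxE (ord1 j).
have hl2 : is_linfun (B 'e_i) by move=> c x y; apply: hB.2.
rewrite (linfun_mx hl2) !mxE; apply: eq_bigr => k _; rewrite !mxE mulrC.
by [].
Qed.

Lemma sup_le_c (R : realType) (S : set R) c :
  (forall x, S x -> x <= c) -> 0 <= c -> sup S <= c.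
Proof.
move=> hS c0; case: (pselect (S !=set0)) => [ne|e]; first exact: ge_sup.
by rewrite sup_out // => -[].
Qed.

Lemma riesz (R : realType) n (G : 'M[R]_n) (l : 'rV[R]_n -> R) :
  spd G -> is_linfun l -> exists z, forall v, l v = ip G v z.
Proof.
move=> hG hl; exists ((invmx G *m \col_i l 'e_i)^T) => v.
by rewrite /ip trmxK mulmxA mulmxK ?spd_unit // -linfun_mx.
Qed.

Section Dual.
Variables (R : realType) (n : nat) (G : 'M[R]_n) (l : 'rV[R]_n -> R).
Hypotheses (hG : spd G) (hl : is_linfun l).

Lemma linfunN v : l (- v) = - l v.
Proof. by have := hl (-1) v 0; rewrite addr0 scaleN1r linfun0 // addr0 mulN1r. Qed.

Lemma dn_has_ub : has_ubound [set s | exists v, v != 0 /\ s = l v / hnorm G v].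
Proof.
have [z hz] := riesz hG hl.
exists (hnorm G z) => s [v [nv ->]].
rewrite ler_pdivrMr ?hnorm_gt0 // hz mulrC; exact: CS.
Qed.

Lemma dn_ub v : l v <= dualnorm G l * hnorm G v.
Proof.
have [->|nv] := eqVneq v 0; first by rewrite linfun0 // hnorm0 mulr0.
rewrite -ler_pdivrMr ?hnorm_gt0 //.
by apply: ub_le_sup; [exact: dn_has_ub | exists v].
Qed.

Lemma dn_ge0 : 0 <= dualnorm G l.
Proof.
case: (pselect (exists v : 'rV[R]_n, v != 0)) => [[v nv]|nov].
  have h1 := dn_ub v; have h2 := dn_ub (- v).
  rewrite linfunN hnormN in h2.
  have hv := hnorm_gt0 hG nv.
  have : 0 <= dualnorm G l * hnorm G v by lra.
  by rewrite pmulr_lge0.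
rewrite /dualnorm sup_out // => -[[s [v [nv _]]] _]; apply: nov; by exists v.
Qed.
End Dual.

Lemma inf_le_pos (R : realType) (S : set R) :
  0 < inf S -> forall x, S x -> inf S <= x.
Proof.
case: (pselect (has_inf S)) => [[_ hlb] _ x Sx|nh]; first exact: ge_inf hlb x Sx.
by rewrite inf_out // ltxx.
Qed.

Section Wcons.
Variables (R : realType) (nx ny : nat) (GX : 'M[R]_nx) (GY : 'M[R]_ny).
Variables (b : 'rV[R]_nx -> 'rV[R]_ny -> R) (beta : R).
Hypotheses (hGX : spd GX) (hGY : spd GY) (hb : is_bilinear b) (hbeta : 0 < beta)
  (hinf : 0 < infsupconst GX GY b) (hbetainf : beta <= infsupconst GX GY b).

Lemma key_infsup q z : (forall v, b v q = ip GX v z) -> beta * hnorm GY q <= hnorm GX z.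
Proof.
move=> hz.
have [->|nq] := eqVneq q 0; first by rewrite hnorm0 // mulr0 hnorm_ge0.
have hq := hnorm_gt0 hGY nq.
rewrite -ler_pdivlMr //.
apply: (le_trans hbetainf); apply: (le_trans (inf_le_pos hinf _)).
  by exists q; split.
apply: sup_le_c; last by apply: divr_ge0; [exact: hnorm_ge0 | exact: ltW].
move=> s [v [nv ->]].
have hv := hnorm_gt0 hGX nv.
rewrite hz ler_pdivrMr ?mulr_gt0 //.
rewrite [hnorm GY q * _]mulrC mulrA mulrAC divfK ?gt_eqF // mulrC; exact: CS.
Qed.

Lemma w_exists e : exists w, (forall q, b w q = b e q) /\
  hnorm GX w <= dualnorm GY (b e) / beta.
Proof.
set Bm := \matrix_(i, j) b 'e_i 'e_j.
have hbm := bil_mx hb.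
set Gi := invmx GX.
set Tm := (Gi *m Bm)^T.
have hT : forall q v, b v q = ip GX v (q *m Tm).
  move=> q v; rewrite /ip trmx_mul trmxK !mulmxA mulmxK ?spd_unit //.
set C := Tm *m GX *m Tm^T.
have hC : C = Tm *m Bm.
  by rewrite /C {2}/Tm trmxK /Gi !mulmxA mulmxK ?spd_unit.
have Cu : C \in unitmx.
  rewrite -row_free_unit; apply: inj_row_free => q hq.
  have h0 : q *m Tm = 0.
    apply/eqP; apply/negPn/negP => nz.
    have := hGX.2 _ nz; rewrite /ip trmx_mul !mulmxA.
    by rewrite -(mulmxA q Tm GX) -(mulmxA q (Tm *m GX)) -/C hq mul0mx mxE ltxx.
  have := key_infsup (hT q); rewrite h0 hnorm0 //.
  apply/contraTeq => nq; rewrite -ltNge; apply: mulr_gt0 => //.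
  exact: hnorm_gt0.
set qs := e *m Bm *m invmx C.
exists (qs *m Tm).
have hwB : qs *m Tm *m Bm = e *m Bm.
  by rewrite -mulmxA -hC mulmxKV.
have hw : forall q, b (qs *m Tm) q = b e q.
  by move=> q; rewrite !hbm hwB.
split => //.
have hl : is_linfun (b e) by move=> c x y; apply: hb.2.
have h1 := dn_ub hGY hl qs.
have h2 := key_infsup (hT qs).
have h3 : hnorm GX (qs *m Tm) ^+ 2 = b e qs by rewrite hnorm_sq // -hw hT.
have hd := dn_ge0 hGY hl.
have hq0 := hnorm_ge0 GY qs.
have hw0 := hnorm_ge0 GX (qs *m Tm).
rewrite ler_pdivlMr //.
move: h1 h2 h3 hd hq0 hw0.
set W := hnorm GX _; set Q := hnorm GY qs; set dn := dualnorm GY (b e) => h1 h2 h3 hd hq0 hw0.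
have [->|Wp] := eqVneq W 0; first by rewrite mul0r.
have Wpos : 0 < W by rewrite lt_def Wp hw0.
have : W * (W * beta) <= W * dn.
  have e1 := ler_wpM2l (ltW hbeta) h1; have e2 := ler_wpM2l hd h2.
  rewrite expr2 in h3; nra.
by rewrite ler_pM2l.
Qed.
End Wcons.

Lemma cont_bound (R : realType) n (G : 'M[R]_n) (B : 'rV[R]_n -> 'rV[R]_n -> R) c :
  spd G -> is_bilinear B -> has_ubound (contset G G B) -> contconst G G B <= c ->
  forall u v, B u v <= c * hnorm G u * hnorm G v.
Proof.
move=> hG hB hub hc u v.
have [->|nu] := eqVneq u 0; first by rewrite (B0l hB) hnorm0 // mulr0 mul0r.
have [->|nv] := eqVneq v 0; first by rewrite (B0r hB) hnorm0 // mulr0.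
have hu := hnorm_gt0 hG nu; have hv := hnorm_gt0 hG nv.
rewrite -mulrA -ler_pdivrMr ?mulr_gt0 //.
apply: le_trans hc; apply: ub_le_sup => //.
by exists u, v.
Qed.

Lemma coer_bound (R : realType) n (G : 'M[R]_n) (A : 'rV[R]_n -> 'rV[R]_n -> R) al :
  spd G -> is_bilinear A -> 0 < coerconst G A -> al <= coerconst G A ->
  forall v, al * hnorm G v ^+ 2 <= A v v.
Proof.
move=> hG hA hc hal v.
have [->|nv] := eqVneq v 0; first by rewrite (B0l hA) hnorm0 // expr0n mulr0.
have hv := hnorm_gt0 hG nv.
rewrite -ler_pdivlMr ?exprn_gt0 //.
apply: le_trans hal _; apply: inf_le_pos => //.
by exists v.
Qed.

Lemma m_ident (R : realType) n (m : 'rV[R]_n -> 'rV[R]_n -> R) :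
  is_bilinear m -> (forall v w, m v w = m w v) -> (forall v, v != 0 -> 0 < m v v) ->
  forall E E' W, m E E - m E' E' - m W W <= 2 * (m (E - E') E - m (E - E') W).
Proof.
move=> hm hs hp E E' W.
have h0 : 0 <= m (E - E' - W) (E - E' - W).
  have [->|nz] := eqVneq (E - E' - W) 0; first by rewrite (B0l hm).
  exact/ltW/hp.
move: h0; rewrite !(BBl hm, BBr hm) (hs E' E) (hs W E) (hs W E').
lra.
Qed.
Lemma step_ineq (R : realType) (dt al ga gm be dn1 dn2 hE hW mEE mEpEp mWW mDE mDW aEE aEW r1E r1nW : R) :
 0 < dt -> 0 < al -> 0 < be -> 0 <= ga -> 0 <= gm -> 0 <= dn1 -> 0 <= dn2 -> 0 <= hE -> 0 <= hW ->
 hW <= dn2 / be ->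
 r1E <= dn1 * hE -> r1nW <= dn1 * hW ->
 aEW <= ga * hE * hW -> mWW <= gm * hW ^+ 2 -> al * hE ^+ 2 <= aEE ->
 mEE - mEpEp - mWW <= 2 * (mDE - mDW) ->
 r1E + r1nW = dt^-1 * (mDE - mDW) + aEE - aEW ->
 mEE - mEpEp + dt * aEE <= dt * (dn1 ^+ 2 / al + 2 / be * (1 + ga / al) * dn1 * dn2
     + (gm / dt + ga ^+ 2 / al) * (dn2 ^+ 2 / be ^+ 2)).
Proof.
move=> dt0 al0 be0 ga0 gm0 d10 d20 hE0 hW0 hWY h1 h2 h3 h4 h5 h6 h7.
have eA : mDE - mDW = dt * (r1E + r1nW - aEE + aEW).
  by rewrite h7; field; rewrite gt_eqF.
set x := dn1 + ga * hW.
have hx : 2 * dn1 * hE + 2 * ga * hE * hW - al * hE ^+ 2 <= x ^+ 2 / al.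
  have E1 : x ^+ 2 / al - (2 * dn1 * hE + 2 * ga * hE * hW - al * hE ^+ 2)
           = (al * hE - x) ^+ 2 / al by rewrite /x; field; rewrite gt_eqF.
  have : 0 <= (al * hE - x) ^+ 2 / al by rewrite divr_ge0 ?sqr_ge0 ?ltW.
  lra.
have hQ : 2 * r1E + 2 * r1nW - aEE + 2 * aEW <= x ^+ 2 / al + 2 * dn1 * hW by lra.
have hQ' := ler_wpM2l (ltW dt0) hQ.
set Y := dn2 / be.
have Y0 : 0 <= Y by rewrite /Y divr_ge0 // ltW.
have hxx : x ^+ 2 <= (dn1 + ga * Y) ^+ 2.
  rewrite !expr2; apply: ler_pM; rewrite /x ?addr_ge0 ?mulr_ge0 // lerD2l ler_wpM2l //.
have hWW : hW ^+ 2 <= Y ^+ 2 by rewrite !expr2; apply: ler_pM.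
have hxx' : x ^+ 2 / al <= (dn1 + ga * Y) ^+ 2 / al by rewrite ler_pM2r ?invr_gt0.
have hdW : dn1 * hW <= dn1 * Y by rewrite ler_wpM2l.
have hF : dt * (x ^+ 2 / al + 2 * dn1 * hW) <= dt * ((dn1 + ga * Y) ^+ 2 / al + 2 * dn1 * Y).
  by apply: ler_wpM2l; [exact: ltW | lra].
have hgm : gm * hW ^+ 2 <= gm * Y ^+ 2 by rewrite ler_wpM2l.
have EF : dt * (dn1 ^+ 2 / al + 2 / be * (1 + ga / al) * dn1 * dn2
     + (gm / dt + ga ^+ 2 / al) * (dn2 ^+ 2 / be ^+ 2))
   = dt * ((dn1 + ga * Y) ^+ 2 / al + 2 * dn1 * Y) + gm * Y ^+ 2.
  by rewrite /Y; field; rewrite !gt_eqF.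
rewrite EF.
have : mEE - mEpEp <= 2 * (dt * (r1E + r1nW - aEE + aEW)) + mWW by rewrite -eA; lra.
have -> : 2 * (dt * (r1E + r1nW - aEE + aEW)) = dt * (2 * r1E + 2 * r1nW - aEE + 2 * aEW) - dt * aEE by ring.
lra.
Qed.

Unset Implicit Arguments.

Theorem proposition2p1
  (R : realType) (n nx ny : nat) (D : set 'rV[R]_n)
  (GX : 'M[R]_nx) (GY : 'M[R]_ny)
  (m a : 'rV[R]_n -> 'rV[R]_nx -> 'rV[R]_nx -> R)
  (b : 'rV[R]_n -> 'rV[R]_nx -> 'rV[R]_ny -> R)
  (K : nat) (dt : R)
  (f : 'rV[R]_n -> nat -> 'rV[R]_nx -> R)
  (g : 'rV[R]_n -> nat -> 'rV[R]_ny -> R)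
  (u : 'rV[R]_n -> nat -> 'rV[R]_nx) (p : 'rV[R]_n -> nat -> 'rV[R]_ny)
  (Nmax : nat) (XN : nat -> {vspace 'rV[R]_nx}) (YN : nat -> {vspace 'rV[R]_ny})
  (uN : nat -> 'rV[R]_n -> nat -> 'rV[R]_nx)
  (pN : nat -> 'rV[R]_n -> nat -> 'rV[R]_ny)
  (mu : 'rV[R]_n) (N k : nat)
  (alphaLB gammaaUB betaLB gammamUB : R) :
  (* Hilbert space structures *)
  spd GX -> spd GY ->
  (* forms *)
  (forall mu, D mu ->
     is_bilinear (m mu) /\ is_bilinear (a mu) /\ is_bilinear (b mu) /\
     (forall v w, m mu v w = m mu w v) /\
     (forall v, v != 0 -> 0 < m mu v v) /\
     has_ubound (contset GX GX (m mu)) /\ has_ubound (contset GX GX (a mu)) /\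
     0 < coerconst GX (a mu) /\
     0 < infsupconst GX GY (b mu)) ->
  (* time stepping and data *)
  0 < dt ->
  (forall mu, D mu -> forall j, (1 <= j <= K)%N ->
     is_linfun (f mu j) /\ is_linfun (g mu j)) ->
  (* truth solution *)
  (forall mu, D mu -> u mu 0%N = 0) ->
  (forall mu, D mu -> forall j, (1 <= j <= K)%N ->
     (forall v, dt^-1 * m mu (u mu j - u mu j.-1) v + a mu (u mu j) v
                + b mu v (p mu j) = f mu j v) /\
     (forall q, b mu (u mu j) q = g mu j q)) ->
  (* reduced basis solutions *)
  (forall N', (1 <= N' <= Nmax)%N -> forall mu, D mu ->
     uN N' mu 0%N = 0 /\
     forall j, (1 <= j <= K)%N ->
       [/\ uN N' mu j \in XN N', pN N' mu j \in YN N',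
           (forall v, v \in XN N' ->
              dt^-1 * m mu (uN N' mu j - uN N' mu j.-1) v + a mu (uN N' mu j) v
              + b mu v (pN N' mu j) = f mu j v) &
           (forall q, q \in YN N' -> b mu (uN N' mu j) q = g mu j q)]) ->
  (* the fixed mu, N, k and the bounds *)
  D mu -> (1 <= N <= Nmax)%N -> (1 <= k <= K)%N ->
  0 < alphaLB -> 0 < gammaaUB -> 0 < betaLB -> 0 < gammamUB ->
  alphaLB <= coerconst GX (a mu) ->
  contconst GX GX (a mu) <= gammaaUB ->
  betaLB <= infsupconst GX GY (b mu) ->
  contconst GX GX (m mu) <= gammamUB ->
  let r1 := fun j (v : 'rV[R]_nx) =>
    f mu j v - dt^-1 * m mu (uN N mu j - uN N mu j.-1) v
    - a mu (uN N mu j) v - b mu v (pN N mu j) in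
  let r2 := fun j (q : 'rV[R]_ny) => g mu j q - b mu (uN N mu j) q in
  let e := fun j => u mu j - uN N mu j in
  let Delta := Num.sqrt (dt * \sum_(1 <= j < k.+1)
      (dualnorm GX (r1 j) ^+ 2 / alphaLB
       + 2 / betaLB * (1 + gammaaUB / alphaLB)
           * dualnorm GX (r1 j) * dualnorm GY (r2 j)
       + (gammamUB / dt + gammaaUB ^+ 2 / alphaLB)
           * (dualnorm GY (r2 j) ^+ 2 / betaLB ^+ 2))) in
  Num.sqrt (m mu (e k) (e k) + dt * \sum_(1 <= j < k.+1) a mu (e j) (e j))
    <= Delta.
Proof.
move=> hGX hGY hforms dt0 hfg hu0 htruth hred hD hN hk al0 ga0 be0 gm0 hal hga hbe hgm.
pose r1 := fun j (v : 'rV[R]_nx) =>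
    f mu j v - dt^-1 * m mu (uN N mu j - uN N mu j.-1) v
    - a mu (uN N mu j) v - b mu v (pN N mu j).
pose r2 := fun j (q : 'rV[R]_ny) => g mu j q - b mu (uN N mu j) q.
pose e := fun j => u mu j - uN N mu j.
pose S := fun j => dualnorm GX (r1 j) ^+ 2 / alphaLB
       + 2 / betaLB * (1 + gammaaUB / alphaLB)
           * dualnorm GX (r1 j) * dualnorm GY (r2 j)
       + (gammamUB / dt + gammaaUB ^+ 2 / alphaLB)
           * (dualnorm GY (r2 j) ^+ 2 / betaLB ^+ 2).
change (Num.sqrt (m mu (e k) (e k) + dt * \sum_(1 <= j < k.+1) a mu (e j) (e j))
    <= Num.sqrt (dt * \sum_(1 <= j < k.+1) S j)).
have [hm [ha [hb [hms [hmp [hmub [haub [hcoer hinfs]]]]]]]] := hforms mu hD.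
have [huN0 hredj] := hred N hN mu hD.
have e0 : e 0%N = 0 by rewrite /e hu0 // huN0 subr0.
have r1lin : forall j, (1 <= j <= K)%N -> is_linfun (r1 j).
  move=> j hj c x y; rewrite /r1 (hfg mu hD j hj).1.
  rewrite (hm.2) (ha.2) (hb.1); ring.
have r2e : forall j, (1 <= j <= K)%N -> r2 j = b mu (e j).
  move=> j hj; apply/funext => q; rewrite /r2 /e (BBl hb) -((htruth mu hD j hj).2 q).
  by [].
have erreq : forall j, (1 <= j <= K)%N -> forall v,
    r1 j v = dt^-1 * m mu (e j - e j.-1) v + a mu (e j) v + b mu v (p mu j - pN N mu j).
  move=> j hj v; rewrite /r1 -((htruth mu hD j hj).1 v) /e subrACA'.
  rewrite !(BBl hm, BBl ha, BBr hb); ring.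
have step : forall j, (1 <= j <= K)%N ->
    m mu (e j) (e j) - m mu (e j.-1) (e j.-1) + dt * a mu (e j) (e j) <= dt * S j.
  move=> j hj.
  have hl1 := r1lin j hj.
  have hl2 : is_linfun (r2 j) by rewrite r2e //; move=> c x y; apply: hb.2.
  have [W [hW1 hW2]] := w_exists hGX hGY hb be0 hinfs hbe (e j).
  rewrite -r2e // in hW2.
  set E := e j; set E' := e j.-1.
  have he := erreq j hj.
  apply: (@step_ineq R dt alphaLB gammaaUB gammamUB betaLB
     (dualnorm GX (r1 j)) (dualnorm GY (r2 j)) (hnorm GX E) (hnorm GX W)
     (m mu E E) (m mu E' E') (m mu W W) (m mu (E - E') E) (m mu (E - E') W)
     (a mu E E) (a mu E W) (r1 j E) (r1 j (- W))).
  - exact: dt0.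
  - exact: al0.
  - exact: be0.
  - exact: ltW.
  - exact: ltW.
  - exact: dn_ge0.
  - exact: dn_ge0.
  - exact: hnorm_ge0.
  - exact: hnorm_ge0.
  - exact: hW2.
  - exact: dn_ub.
  - by rewrite -(hnormN GX W); apply: dn_ub.
  - exact: cont_bound.
  - by rewrite expr2 mulrA; apply: cont_bound.
  - exact: coer_bound.
  - exact: m_ident.
  - rewrite !he (BNr hm) (BNr ha) (BNl hb) hW1.
    have -> : b mu E (p mu j - pN N mu j) = b mu (e j) (p mu j - pN N mu j) by [].
    lra.
have main : forall k', (k' <= K)%N ->
    m mu (e k') (e k') + dt * \sum_(1 <= j < k'.+1) a mu (e j) (e j)
      <= dt * \sum_(1 <= j < k'.+1) S j.
  elim=> [_|k' IH hk'].
    by rewrite e0 (B0l hm) !big_geq // mulr0 add0r.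
  have E1 : dt * \sum_(1 <= j < k'.+2) a mu (e j) (e j)
      = dt * \sum_(1 <= j < k'.+1) a mu (e j) (e j) + dt * a mu (e k'.+1) (e k'.+1).
    by rewrite big_nat_recr // mulrDr.
  have E2 : dt * \sum_(1 <= j < k'.+2) S j = dt * \sum_(1 <= j < k'.+1) S j + dt * S k'.+1.
    by rewrite big_nat_recr // mulrDr.
  rewrite E1 E2.
  have h1 := step k'.+1 (ltac:(by rewrite /= hk')).
  have h2 := IH (ltnW hk').
  simpl in h1; lra.
apply: ler_wsqrtr; apply: main; by case/andP: hk.
Qed.
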